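(* Let $\kappa_r\ge0$ be an integer with $\kappa_c>\kappa_r$, let $\tilde r:\mathcal Z_{N_{i_0}^{\kappa_r}}\to[0,1]$ and $\gamma\in(0,1)$. Define the cost of the original chain $C(z)=\sum_{t\ge0}\gamma^t\,\mathbb E[\tilde r(z_{N_{i_0}^{\kappa_r}}(t))\mid z(0)=z]$ for $z\in\mathcal Z$, and the cost of the sub-chain $\tilde C(x)=\sum_{t\ge0}\gamma^t\,\mathbb E[\tilde r(x_{N_{i_0}^{\kappa_r}}(t))\mid x(0)=x]$ for $x\in\mathcal Z_N$, where $(x(t))$ is the Markov chain on $\mathcal Z_N$ with kernel $\overline{\mathbb P}$. Then $$\sup_{z\in\mathcal Z}\left|\tilde C(z_N)-C(z)\right|\le\frac{\gamma^{\kappa_c-\kappa_r+1}}{1-\gamma}.$$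
   Context: Localized Markov chain: agents $\mathcal N=\{1,\dots,n\}$ on an undirected graph with graph distance $\mathrm{dist}$; $N_i^\kappa=\{j:\mathrm{dist}(i,j)\le\kappa\}$, $\mathcal N_i=N_i^1$. Agent $j$ has a finite local state space $\mathcal Z_j$; $\mathcal Z=\prod_j\mathcal Z_j$, and $z_I,\mathcal Z_I$ denote joint states/spaces of $I\subseteq\mathcal N$, with $-I=\mathcal N\setminus I$. The transition kernel is $\mathbb P(z'\mid z)=\prod_j\mathbb P_j(z_j'\mid z_{\mathcal N_j})$, and it is assumed aperiodic and irreducible, with (full-support) stationary distribution $\overline\pi$. Fix an agent $i_0$ and an integer $\kappa_c\ge1$, and let $N=N_{i_0}^{\kappa_c}$, $\overline\pi_N$ the marginal of $\overline\pi$ on $\mathcal Z_N$, and $\mathbb P_N(x'\mid z)=\sum_{z'_{-N}}\mathbb P(x',z'_{-N}\mid z)$ for $x'\in\mathcal Z_N$, $z\in\mathcal Z$. The sub-chain kernel on $\mathcal Z_N$ is $$\overline{\mathbb P}(x'\mid x)=\sum_{z_{-N}\in\mathcal Z_{-N}}\frac{\overline\pi(x,z_{-N})}{\overline\pi_N(x)}\,\mathbb P_N\big(x'\mid(x,z_{-N})\big),\qquad x,x'\in\mathcal Z_N.$$ *)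

(* Defs.v *)
From HB Require Import structures.
From mathcomp Require Import all_boot all_order all_algebra.
From mathcomp Require Import all_classical all_reals all_analysis.
Import Order.TTheory GRing.Theory Num.Theory.
Import numFieldNormedType.Exports.
Local Open Scope ring_scope.

(* Agents are 'I_n; the undirected graph is given by a relation adj on 'I_n
   (symmetric & irreflexive, assumed in the theorem).
   Nball adj i k = N_i^k = {j | dist(i,j) <= k}, computed by breadth-first layers. *)
Fixpoint Nball {n : nat} (adj : rel 'I_n) (i : 'I_n) (k : nat) : {set 'I_n} :=
  match k with
  | 0 => [set i]
  | k'.+1 => Nball adj i k' :|: [set j | [exists l in Nball adj i k', adj l j]]
  end.

Lemma ball_mono {n : nat} (adj : rel 'I_n) (i : 'I_n) {k1 k2 : nat} :
  (k1 <= k2)%N -> Nball adj i k1 \subset Nball adj i k2.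
Proof.
elim: k2 => [|k IH]; first by rewrite leqn0 => /eqP ->.
rewrite leq_eqVlt => /orP [/eqP -> // | H].
have HH := IH H.
rewrite /=; apply/fintype.subsetP => x /(fintype.subsetP HH) hx; by rewrite inE hx.
Qed.

Definition state {n : nat} (Z : 'I_n -> finType) := {dffun forall j : 'I_n, Z j}.

Definition lstate {n : nat} (Z : 'I_n -> finType) (I : {set 'I_n}) :=
  {dffun forall j : {j : 'I_n | j \in I}, Z (val j)}.

Definition restr {n : nat} {Z : 'I_n -> finType} (I : {set 'I_n})
  (z : state Z) : lstate Z I :=
  @finfun _ (fun j : {j : 'I_n | j \in I} => Z (val j)) (fun j => z (val j)).

Definition restrS {n : nat} {Z : 'I_n -> finType} {K N : {set 'I_n}}
  (hKN : K \subset N) (x : lstate Z N) : lstate Z K :=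
  @finfun _ (fun j : {j : 'I_n | j \in K} => Z (val j))
    (fun j => x (exist (fun j => j \in N) (val j) (fintype.subsetP hKN _ (valP j)))).

Definition globalP {R : realType} {n : nat} {adj : rel 'I_n} {Z : 'I_n -> finType}
  (Pj : forall j : 'I_n, Z j -> lstate Z (Nball adj j 1) -> R)
  (z z' : state Z) : R :=
  \prod_(j : 'I_n) Pj j (z' j) (restr (Nball adj j 1) z).

Fixpoint kpow {R : realType} {T : finType} (K : T -> T -> R) (t : nat) (x y : T) : R :=
  match t with
  | 0 => (x == y)%:R
  | t'.+1 => \sum_(w : T) kpow K t' x w * K w y
  end.

Definition marg {R : realType} {n : nat} {Z : 'I_n -> finType} (N : {set 'I_n})
  (pi : state Z -> R) (x : lstate Z N) : R :=
  \sum_(z : state Z | restr N z == x) pi z.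

Definition kernelN {R : realType} {n : nat} {Z : 'I_n -> finType} (N : {set 'I_n})
  (P : state Z -> state Z -> R) (z : state Z) (x' : lstate Z N) : R :=
  \sum_(z' : state Z | restr N z' == x') P z z'.

(* Sub-chain kernel Pbar(x'|x) on Z_N; the sum over z_{-N} is the sum over the
   global states z with z_N = x. *)
Definition subP {R : realType} {n : nat} {Z : 'I_n -> finType} (N : {set 'I_n})
  (P : state Z -> state Z -> R) (pi : state Z -> R) (x x' : lstate Z N) : R :=
  \sum_(z : state Z | restr N z == x) (pi z / marg N pi x) * kernelN N P z x'.

Definition dcost {R : realType} {T : finType} (K : T -> T -> R) (gamma : R)
  (f : T -> R) (x : T) : R :=
  limn (series (fun t => gamma ^+ t * \sum_(y : T) kpow K t x y * f y)).

(* Main.v *)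
Require Import Defs.
From HB Require Import structures.
From mathcomp Require Import all_boot all_order all_algebra.
From mathcomp Require Import all_classical all_reals all_analysis.
Import Order.TTheory GRing.Theory Num.Theory.
Import numFieldNormedType.Exports.
Local Open Scope ring_scope.

Definition upd {n : nat} {Z : 'I_n -> finType} (y : state Z) {j0 : 'I_n} (a : Z j0) : state Z :=
  @finfun _ Z (fun j => @dfwith _ (fun k => Z k) (fun k => y k) j0 a j).

Lemma upd_in {n} {Z : 'I_n -> finType} (y : state Z) j0 (a : Z j0) : upd y a j0 = a.
Proof. by rewrite /upd ffunE; apply: dfwith_in. Qed.

Lemma upd_out {n} {Z : 'I_n -> finType} (y : state Z) j0 (a : Z j0) j : j0 != j -> upd y a j = y j.
Proof. by move=> h; rewrite /upd ffunE; apply: dfwith_out. Qed.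

Lemma upd_upd {n} {Z : 'I_n -> finType} (y : state Z) j0 (a b : Z j0) : upd (upd y a) b = upd y b.
Proof.
apply/ffunP => j; have [<-|h] := eqVneq j0 j; first by rewrite !upd_in.
by rewrite !upd_out.
Qed.

Lemma upd_id {n} {Z : 'I_n -> finType} (y : state Z) j0 : upd y (y j0) = y.
Proof.
apply/ffunP => j; have [<-|h] := eqVneq j0 j; first by rewrite !upd_in.
by rewrite !upd_out.
Qed.

Lemma sum_coord {R : realType} {n} {Z : 'I_n -> finType} (j0 : 'I_n) (c : Z j0)
  (h : Z j0 -> R) (H : state Z -> R) :
  (forall y (a : Z j0), H (upd y a) = H y) ->
  \sum_(y : state Z) h (y j0) * H y = (\sum_a h a) * \sum_(y : state Z | y j0 == c) H y.
Proof.
move=> HH.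
rewrite (partition_big (fun y : state Z => y j0) xpredT) //= big_distrl /=.
apply: eq_bigr => a _.
rewrite (eq_bigr (fun y => h a * H y)); last by move=> y /eqP ->.
rewrite -big_distrr /=; congr (_ * _).
rewrite (reindex_onto (fun y : state Z => upd y a) (fun y => upd y c)) /=; last first.
  by move=> y /eqP <-; rewrite upd_upd upd_id.
apply: eq_big => y; last by move=> _; rewrite HH.
rewrite upd_in eqxx upd_upd /=.
apply/eqP/eqP => [<-|<-]; first by rewrite upd_in.
by rewrite upd_id.
Qed.

Lemma prod_local {R : realType} {n} {Z : 'I_n -> finType} (z0 : state Z) (S : {set 'I_n})
  (q1 q2 : forall j, Z j -> R) (f : state Z -> R) :
  (forall j, \sum_a q1 j a = 1) -> (forall j, \sum_a q2 j a = 1) ->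
  (forall j, j \in S -> forall a, q1 j a = q2 j a) ->
  (forall y y' : state Z, (forall j, j \in S -> y j = y' j) -> f y = f y') ->
  \sum_(y : state Z) (\prod_j q1 j (y j)) * f y = \sum_(y : state Z) (\prod_j q2 j (y j)) * f y.
Proof.
move=> s1 s2 e12 fS.
pose qm (m : nat) (j : 'I_n) (a : Z j) := if (j < m)%N then q2 j a else q1 j a.
suff H : forall m, \sum_(y : state Z) (\prod_j q1 j (y j)) * f y
                 = \sum_(y : state Z) (\prod_j qm m j (y j)) * f y.
  rewrite (H n); apply: eq_bigr => y _; congr (_ * _); apply: eq_bigr => j _.
  by rewrite /qm ltn_ord.
elim=> [|m IH].
  by apply: eq_bigr => y _; congr (_ * _); apply: eq_bigr => j _.
rewrite IH.
case: (ltnP m n) => [mn|nm]; last first.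
  apply: eq_bigr => y _; congr (_ * _); apply: eq_bigr => j _.
  rewrite /qm; have jm : (j < m)%N by apply: leq_trans (ltn_ord j) nm.
  by rewrite jm ltnS ltnW.
pose j0 : 'I_n := Ordinal mn.
have qmo : forall j, j != j0 -> qm m.+1 j = qm m j.
  move=> j jn; rewrite /qm ltnS leq_eqVlt.
  have -> : (nat_of_ord j == m) = false by apply/negbTE; exact: jn.
  by [].
case: (boolP (j0 \in S)) => j0S.
  apply: eq_bigr => y _; congr (_ * _); apply: eq_bigr => j _.
  have [->|jn] := eqVneq j j0; last by rewrite qmo.
  by rewrite /qm /= ltnn ltnSn e12.
apply/eqP; rewrite eq_sym -subr_eq0 -sumrB.
rewrite (eq_bigr (fun y : state Z => (qm m.+1 j0 (y j0) - qm m j0 (y j0)) *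
     ((\prod_(j | j != j0) qm m j (y j)) * f y))); last first.
  move=> y _; rewrite (bigD1 j0) //= [X in _ - X * _](bigD1 j0) //=.
  rewrite (eq_bigr (fun j => qm m j (y j))); last by move=> j jn; rewrite qmo.
  by rewrite mulrBl !mulrA.
rewrite (sum_coord j0 (z0 j0) (fun a => qm m.+1 j0 a - qm m j0 a) (fun y => (\prod_(j | j != j0) qm m j (y j)) * f y)).
  suff -> : \sum_a (qm m.+1 j0 a - qm m j0 a) = 0 by rewrite mul0r.
  by rewrite sumrB /qm /= ltnn ltnSn s1 s2 subrr.
move=> y a; congr (_ * _).
  by apply: eq_bigr => j jn; rewrite upd_out // eq_sym.
apply: fS => j jS; rewrite upd_out //; apply/eqP => e; move: j0S; rewrite e jS.
by [].
Qed.

Lemma kpow_ge0 {R : realType} {T : finType} (K : T -> T -> R) :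
  (forall x y, 0 <= K x y) -> forall t x y, 0 <= kpow K t x y.
Proof.
move=> K0; elim=> [|t IH] x y /=; first by rewrite ler0n.
by apply: sumr_ge0 => w _; rewrite mulr_ge0.
Qed.

Lemma kpow_le1 {R : realType} {T : finType} (K : T -> T -> R) :
  (forall x y, 0 <= K x y) -> (forall x, \sum_y K x y <= 1) ->
  forall t x, \sum_y kpow K t x y <= 1.
Proof.
move=> K0 K1; elim=> [|t IH] x /=.
  by rewrite (bigD1 x) //= eqxx big1 ?addr0 // => y /negbTE; rewrite eq_sym => ->.
rewrite exchange_big /=; apply: le_trans (IH x); apply: ler_sum => w _.
rewrite -big_distrr /=; rewrite -[X in _ <= X]mulr1; apply: ler_wpM2l => //.
exact: kpow_ge0.
Qed.

Lemma sum_ind {R : realType} {T : finType} (c : T) : \sum_(x : T) ((x == c)%:R : R) = 1.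
Proof. by rewrite (bigD1 c) //= eqxx big1 ?addr0 // => x /negbTE ->. Qed.

Lemma globalP_sum {R : realType} {n} {adj : rel 'I_n} {Z : 'I_n -> finType}
  (Pj : forall j : 'I_n, Z j -> lstate Z (Nball adj j 1) -> R) (z0 w : state Z) :
  (forall j s, \sum_(a : Z j) Pj j a s = 1) -> \sum_y globalP Pj w y = 1.
Proof.
move=> hs.
have := @prod_local R n Z z0 (finset.set0) (fun j a => Pj j a (restr (Nball adj j 1) w))
   (fun j a => (a == z0 j)%:R) (fun _ => 1) (fun j => hs _ _) (fun j => sum_ind _)
   (fun j (h : j \in finset.set0) => ltac:(by rewrite inE in h)) (fun _ _ _ => erefl).
rewrite /globalP; under eq_bigr do rewrite mulr1; move=> ->.
rewrite (bigD1 z0) //= [X in _ + X]big1 ?addr0.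
  by rewrite mulr1 big1 // => j _; rewrite eqxx.
move=> y ne; rewrite mulr1.
have : ~~ [forall j, y j == z0 j].
  apply: contra ne => /forallP h; apply/eqP/ffunP => j; exact/eqP.
rewrite negb_forall => /existsP [j hj].
by rewrite (bigD1 j) //= (negbTE hj) mul0r.
Qed.

Definition dep {n} {Z : 'I_n -> finType} {R : Type} (S : {set 'I_n}) (f : state Z -> R) :=
  forall y y' : state Z, (forall j, j \in S -> y j = y' j) -> f y = f y'.

Lemma ball_nb {n} {adj : rel 'I_n} {i k j} :
  j \in Nball adj i k -> Nball adj j 1 \subset Nball adj i k.+1.
Proof.
move=> hj; apply/fintype.subsetP => l; rewrite /= !inE => /orP [/eqP ->|].
  by rewrite hj.
move=> /existsP [l0 /andP []]; rewrite inE => /eqP -> hl.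
apply/orP; right; apply/existsP; exists j; by rewrite hj.
Qed.

Lemma restr_agree {n} {Z : 'I_n -> finType} (S : {set 'I_n}) (z w : state Z) :
  restr S z = restr S w -> forall j, j \in S -> z j = w j.
Proof.
move=> /ffunP e j hj; have := e (exist (fun j => j \in S) j hj).
by rewrite /restr !ffunE.
Qed.

Lemma globalP_dep {R : realType} {n} {adj : rel 'I_n} {Z : 'I_n -> finType}
  (Pj : forall j : 'I_n, Z j -> lstate Z (Nball adj j 1) -> R) (z0 : state Z) i k
  (f : state Z -> R) :
  (forall j s, \sum_(a : Z j) Pj j a s = 1) -> dep (Nball adj i k) f ->
  dep (Nball adj i k.+1) (fun w => \sum_y globalP Pj w y * f y).
Proof.
move=> hs df w w' ag.
apply: (@prod_local R n Z z0 (Nball adj i k) (fun j a => Pj j a (restr (Nball adj j 1) w))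
  (fun j a => Pj j a (restr (Nball adj j 1) w'))) => // j hj a.
congr (Pj j a _); apply/ffunP => -[l hl]; rewrite /restr !ffunE /=.
by apply: ag; exact: (fintype.subsetP (ball_nb hj) l hl).
Qed.

Lemma kernelN_sumF {R : realType} {n} {Z : 'I_n -> finType} (N : {set 'I_n})
  (P : state Z -> state Z -> R) z (F : lstate Z N -> R) :
  \sum_x kernelN N P z x * F x = \sum_y P z y * F (restr N y).
Proof.
rewrite [RHS](partition_big (fun y => restr N y) xpredT) //=.
apply: eq_bigr => x _; rewrite /kernelN big_distrl /=.
by apply: eq_big => [y //|y /eqP ->].
Qed.

Lemma marg_ge0 {R : realType} {n} {Z : 'I_n -> finType} (N : {set 'I_n}) (pi : state Z -> R) x :
  (forall z, 0 < pi z) -> 0 <= marg N pi x.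
Proof. by move=> hp; apply: sumr_ge0 => z _; exact: ltW. Qed.

Lemma subP_ge0 {R : realType} {n} {Z : 'I_n -> finType} (N : {set 'I_n})
  (P : state Z -> state Z -> R) (pi : state Z -> R) x x' :
  (forall z y, 0 <= P z y) -> (forall z, 0 < pi z) -> 0 <= subP N P pi x x'.
Proof.
move=> P0 hp; apply: sumr_ge0 => z _; apply: mulr_ge0.
  by apply: divr_ge0; [exact: ltW | exact: marg_ge0].
by apply: sumr_ge0.
Qed.

Lemma subP_sumF {R : realType} {n} {Z : 'I_n -> finType} (N : {set 'I_n})
  (P : state Z -> state Z -> R) (pi : state Z -> R) x (F : lstate Z N -> R) :
  \sum_x' subP N P pi x x' * F x' =
  \sum_(z | restr N z == x) (pi z / marg N pi x) * \sum_y P z y * F (restr N y).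
Proof.
rewrite /subP; under eq_bigr do rewrite big_distrl /=.
rewrite exchange_big /=; apply: eq_bigr => z _.
by rewrite -kernelN_sumF big_distrr /=; apply: eq_bigr => x' _; rewrite mulrA.
Qed.

Lemma subP_le1 {R : realType} {n} {Z : 'I_n -> finType} (N : {set 'I_n})
  (P : state Z -> state Z -> R) (pi : state Z -> R) x :
  (forall z, \sum_y P z y = 1) -> (forall z, 0 < pi z) -> \sum_x' subP N P pi x x' <= 1.
Proof.
move=> P1 hp.
have := subP_sumF N P pi x (fun _ => 1).
under eq_bigr do rewrite mulr1. move=> ->.
under eq_bigr do under eq_bigr do rewrite mulr1.
under eq_bigr do rewrite P1 mulr1.
rewrite -big_distrl /= -/(marg N pi x).
have [->|nz] := eqVneq (marg N pi x) 0; first by rewrite mul0r ler01.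
by rewrite divff.
Qed.

Lemma kpow_step {R : realType} {T : finType} (K : T -> T -> R) t x (g : T -> R) :
  \sum_y kpow K t.+1 x y * g y = \sum_w kpow K t x w * \sum_y K w y * g y.
Proof.
rewrite /=; under eq_bigr do rewrite big_distrl /=.
rewrite exchange_big /=; apply: eq_bigr => w _; rewrite big_distrr /=.
by apply: eq_bigr => y _; rewrite mulrA.
Qed.

Lemma claim {R : realType} {n} {adj : rel 'I_n} {Z : 'I_n -> finType}
  (Pj : forall j : 'I_n, Z j -> lstate Z (Nball adj j 1) -> R) (pi : state Z -> R)
  (i0 : 'I_n) (kc : nat) (z0 : state Z) :
  (forall j s, \sum_(a : Z j) Pj j a s = 1) -> (forall z, 0 < pi z) ->
  forall t k, (k + t <= kc)%N -> forall (f : state Z -> R) (F : lstate Z (Nball adj i0 kc) -> R),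
  dep (Nball adj i0 k) f -> (forall y, f y = F (restr (Nball adj i0 kc) y)) ->
  forall z, \sum_y kpow (globalP Pj) t z y * f y =
    \sum_x kpow (subP (Nball adj i0 kc) (globalP Pj) pi) t (restr (Nball adj i0 kc) z) x * F x.
Proof.
move=> hs hp; elim=> [|t IH] k hk f F df hF z.
  rewrite /= (bigD1 z) //= eqxx mul1r big1 ?addr0; last first.
    by move=> y; rewrite eq_sym => /negbTE ->; rewrite mul0r.
  rewrite (bigD1 (restr (Nball adj i0 kc) z)) //= eqxx mul1r big1 ?addr0 //.
  by move=> y; rewrite eq_sym => /negbTE ->; rewrite mul0r.
rewrite !kpow_step.
apply: (IH k.+1); first by rewrite addSn -addnS.
  exact: globalP_dep.
move=> w; rewrite subP_sumF.
set N := Nball adj i0 kc.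
set f1 := fun w => \sum_y globalP Pj w y * f y.
have sub1 : Nball adj i0 k.+1 \subset N.
  apply: (ball_mono adj i0); apply: leq_trans hk; by rewrite addnS ltnS leq_addr.
have df1 : dep (Nball adj i0 k.+1) f1 by exact: globalP_dep.
transitivity (\sum_(z | restr N z == restr N w) pi z / marg N pi (restr N w) * f1 w).
  rewrite -big_distrl /= -big_distrl /= -/(marg N pi (restr N w)).
  have mpos : 0 < marg N pi (restr N w).
    apply: lt_le_trans (hp w) _; rewrite /marg (bigD1 w) //= lerDl.
    by apply: sumr_ge0 => y _; exact: ltW.
  by rewrite divff ?mul1r // gt_eqF.
apply: eq_bigr => y /eqP ey; congr (_ * _).
rewrite (df1 w y); last first.
  move=> j hj; symmetry; apply: (restr_agree _ _ _ ey).
  exact: (fintype.subsetP sub1).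
by apply: eq_bigr => y' _; rewrite hF.
Qed.

From mathcomp Require Import ring lra.

Lemma sum01 {R : realType} {T : finType} (K : T -> T -> R) (g : T -> R) t x :
  (forall x y, 0 <= K x y) -> (forall x, \sum_y K x y <= 1) -> (forall y, 0 <= g y <= 1) ->
  0 <= \sum_y kpow K t x y * g y <= 1.
Proof.
move=> K0 K1 g01; apply/andP; split.
  apply: sumr_ge0 => y _; apply: mulr_ge0; first exact: kpow_ge0.
  by case/andP: (g01 y).
apply: le_trans (kpow_le1 K K0 K1 t x); apply: ler_sum => y _.
rewrite -[X in _ <= X]mulr1; apply: ler_wpM2l; first exact: kpow_ge0.
by case/andP: (g01 y).
Qed.

Lemma tail_sum {R : realType} (g : R) T N : g != 1 ->
  \sum_(0 <= t < N) (if (T <= t)%N then g ^+ t else 0) = (g ^+ T - g ^+ (maxn N T)) / (1 - g).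
Proof.
move=> g1; have g1' : 1 - g != 0 by rewrite subr_eq0 eq_sym.
elim: N => [|N IH]; first by rewrite big_geq // max0n subrr mul0r.
rewrite big_nat_recr //= IH.
case: (leqP T N) => hTN.
  rewrite (maxn_idPl (leqW hTN)) exprS.
  by field.
rewrite (maxn_idPr hTN) addr0.
by [].
Qed.

Theorem mainTheorem20 (R : realType) (n : nat) (adj : rel 'I_n)
  (Z : 'I_n -> finType)
  (Pj : forall j : 'I_n, Z j -> lstate Z (Nball adj j 1) -> R)
  (pi : state Z -> R) (i0 : 'I_n) (kc kr : nat)
  (rt : lstate Z (Nball adj i0 kr) -> R) (gamma : R) :
  (* undirected simple graph *)
  (forall i j, adj i j = adj j i) -> (forall i, ~~ adj i i) ->
  (* each local kernel is a probability distribution on Z_j *)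
  (forall j a s, 0 <= Pj j a s) -> (forall j s, \sum_(a : Z j) Pj j a s = 1) ->
  (* irreducible *)
  (forall z z' : state Z, exists t, 0 < kpow (globalP Pj) t z z') ->
  (* aperiodic: the period (gcd of return times) of every state is 1 *)
  (forall (z : state Z) (d : nat),
      (forall t, 0 < kpow (globalP Pj) t z z -> (d %| t)%N) -> d = 1%N) ->
  (* pi is the (full-support) stationary distribution *)
  (forall z, 0 < pi z) -> \sum_(z : state Z) pi z = 1 ->
  (forall z', \sum_(z : state Z) pi z * globalP Pj z z' = pi z') ->
  (1 <= kc)%N -> forall hk : (kr < kc)%N,
  (forall x, 0 <= rt x <= 1) ->
  0 < gamma < 1 ->
  let N := Nball adj i0 kc in
  let K := Nball adj i0 kr in
  let C := dcost (globalP Pj) gamma (fun z => rt (restr K z)) in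
  let Ct := dcost (subP N (globalP Pj) pi) gamma
              (fun x => rt (restrS (ball_mono adj i0 (ltnW hk)) x)) in
  forall z : state Z, `| Ct (restr N z) - C z | <= gamma ^+ (kc - kr + 1) / (1 - gamma).
Proof.
move=> _ _ P0 hs _ _ hp _ _ _ hk hr /andP [g0 g1] N K C Ct z.
set P := globalP Pj.
set Q := subP N P pi.
set f := fun y => rt (restr K y).
set F := fun x => rt (restrS (ball_mono adj i0 (ltnW hk)) x).
pose a t := gamma ^+ t * \sum_y kpow P t z y * f y.
pose b t := gamma ^+ t * \sum_x kpow Q t (restr N z) x * F x.
have PP0 : forall x y, 0 <= P x y by move=> x y; apply: prodr_ge0 => j _.
have PP1 : forall x, \sum_y P x y <= 1 by move=> x; rewrite globalP_sum.
have QQ0 : forall x y, 0 <= Q x y by move=> x y; apply: subP_ge0.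
have QQ1 : forall x, \sum_y Q x y <= 1.
  by move=> x; apply: subP_le1 => // w; apply: (globalP_sum Pj z).
have f01 : forall y, 0 <= f y <= 1 by move=> y; apply: hr.
have F01 : forall y, 0 <= F y <= 1 by move=> y; apply: hr.
have ab : forall t, 0 <= a t <= gamma ^+ t /\ 0 <= b t <= gamma ^+ t.
  move=> t; have gt0 : 0 <= gamma ^+ t by apply: exprn_ge0; exact: ltW.
  have [/andP [h1 h2] /andP [h3 h4]] := (sum01 P f t z PP0 PP1 f01, sum01 Q F t (restr N z) QQ0 QQ1 F01).
  split; apply/andP; split; rewrite /a /b ?mulr_ge0 //.
    by rewrite -[X in _ <= X]mulr1 ler_wpM2l.
  by rewrite -[X in _ <= X]mulr1 ler_wpM2l.
have geo : cvgn (series (geometric 1 gamma)).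
  by apply: is_cvg_geometric_series; rewrite ger0_norm // ltW.
have ca : cvgn (series a).
  apply: (series_le_cvg _ _ _ geo) => t; rewrite /geometric /= ?mul1r.
  - by case: (ab t) => /andP [] ->.
  - by apply: exprn_ge0; exact: ltW.
  - by case: (ab t) => /andP [] _ ->.
have cb : cvgn (series b).
  apply: (series_le_cvg _ _ _ geo) => t; rewrite /geometric /= ?mul1r.
  - by case: (ab t) => _ /andP [] ->.
  - by apply: exprn_ge0; exact: ltW.
  - by case: (ab t) => _ /andP [] _ ->.
have eqab : forall t, (t <= kc - kr)%N -> a t = b t.
  move=> t ht; rewrite /a /b; congr (_ * _).
  apply: (claim Pj pi i0 kc z hs hp t kr).
  - by rewrite -(subnKC (ltnW hk)) leq_add2l.
  - move=> y y' ag; rewrite /f; congr rt; apply/ffunP => -[j hj].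
    by rewrite /restr !ffunE /=; apply: ag.
  - by move=> y; rewrite /f /F; congr rt; apply/ffunP => -[j hj]; rewrite /restrS /restr !ffunE.
have -> : Ct (restr N z) - C z = limn (series (b - a)) by rewrite lim_seriesB.
pose T := (kc - kr + 1)%N.
have gn1 : gamma != 1 by rewrite lt_eqF.
have bnd : forall M, `|series (b - a) M| <= gamma ^+ T / (1 - gamma).
  move=> M; rewrite /series /=.
  apply: le_trans (ler_norm_sum _ _ _) _.
  apply: le_trans (_ : _ <= \sum_(0 <= t < M) (if (T <= t)%N then gamma ^+ t else 0)) _.
    apply: ler_sum => t _; case: ifP => hT.
      rewrite !fctE.
      case: (ab t) => /andP [h1 h2] /andP [h3 h4]; rewrite ler_norml; apply/andP; split; lra.
    rewrite !fctE eqab ?subrr ?normr0 //.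
    by move: hT; rewrite /T addn1 ltnNge => /negbFE.
  rewrite tail_sum //; apply: ler_wpM2r.
    by rewrite invr_ge0 subr_ge0 ltW.
  by rewrite gerBl; apply: exprn_ge0; exact: ltW.
have cd : cvgn (series (b - a)) by apply: is_cvg_seriesB.
rewrite ler_norml; apply/andP; split.
  apply: limr_ge => //; apply: nearW => M; have := bnd M; rewrite ler_norml => /andP [] //.
apply: limr_le => //; apply: nearW => M; have := bnd M; rewrite ler_norml => /andP [] //.
Qed.
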